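(* There exists a visual Gromov-hyperbolic metric space $X$ such that $\operatorname{asdim} X = 2$ and $\dim(\partial X) = 0$. In particular, the inequality $\operatorname{asdim} X \leq \dim(\partial X) + 1$ fails for $X$.
   Context: For a metric space $(X,d)$ and $x,y,w \in X$, the Gromov product is $(x|y)_w = \frac{1}{2}\big(d(x,w)+d(y,w)-d(x,y)\big)$. $X$ is $\delta$-hyperbolic if $(x|z)_w \geq \min\{(x|y)_w,(y|z)_w\} - \delta$ for all $x,y,z,w \in X$, and Gromov-hyperbolic if it is $\delta$-hyperbolic for some $\delta \geq 0$. A sequence $(x_i)$ converges at infinity if $(x_i|x_j)_w \to \infty$ as $i,j\to\infty$; two such sequences $(x_i),(y_i)$ are equivalent if $(x_i|y_j)_w \to \infty$. The boundary $\partial X$ is the set of equivalence classes, with the topology in which two classes are close when $\liminf_{i,j\to\infty}(x_i|y_j)_w$ is large (equivalently, the topology induced by a visual metric); $\dim(\partial X)$ denotes its topological (covering) dimension. A geodesic ray is an isometric embedding $[0,\infty)\to X$. A hyperbolic space $X$ is visual if there exist $x_0 \in X$ and $D>0$ such that for every $x\in X$ there is a geodesic ray $r$ starting at $x_0$ with $d(x,r)\leq D$. The asymptotic dimension $\operatorname{asdim} X$ is the minimal $n$ such that for every $d>0$ there is a cover of $X$ by sets of uniformly bounded diameter such that every ball of radius $d$ in $X$ meets at most $n+1$ of the sets. *)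

(* Defs.v *)
From Stdlib Require Import Reals Lra List.
Import ListNotations.
Open Scope R_scope.

Record MetricSpace := {
  carrier :> Type;
  dist : carrier -> carrier -> R;
  dist_eq0 : forall x y, dist x y = 0 <-> x = y;
  dist_sym : forall x y, dist x y = dist y x;
  dist_tri : forall x y z, dist x z <= dist x y + dist y z
}.

Arguments dist {m} _ _.

Section Hyp.
Variable X : MetricSpace.

Definition gromov_product (w x y : X) : R :=
  (dist x w + dist y w - dist x y) / 2.

Definition delta_hyperbolic (delta : R) : Prop :=
  forall x y z w : X,
    gromov_product w x z >= Rmin (gromov_product w x y) (gromov_product w y z) - delta.

Definition gromov_hyperbolic : Prop :=
  exists delta, 0 <= delta /\ delta_hyperbolic delta.

Definition geodesic_ray (r : R -> X) : Prop :=
  forall s t, 0 <= s -> 0 <= t -> dist (r s) (r t) = Rabs (s - t).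

Definition dist_to_ray_le (x : X) (r : R -> X) (D : R) : Prop :=
  forall eps, 0 < eps -> exists t, 0 <= t /\ dist x (r t) <= D + eps.

Definition visual : Prop :=
  exists (x0 : X) (D : R), 0 < D /\
    forall x : X, exists r : R -> X,
      geodesic_ray r /\ r 0 = x0 /\ dist_to_ray_le x r D.

Definition closed_ball (x : X) (d : R) : X -> Prop := fun y => dist x y <= d.

Definition asdim_le (n : nat) : Prop :=
  forall d, 0 < d ->
    exists (U : (X -> Prop) -> Prop),
      (forall x : X, exists A, U A /\ A x) /\
      (exists Dm, forall A, U A -> forall x y, A x -> A y -> dist x y <= Dm) /\
      (forall (x : X) (l : list (X -> Prop)),
          NoDup l -> length l = S (S n) -> (forall A, In A l -> U A) ->
          exists A, In A l /\ ~ (exists y, closed_ball x d y /\ A y)).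

Definition asdim_eq (n : nat) : Prop :=
  asdim_le n /\ match n with 0%nat => True | S m => ~ asdim_le m end.

Definition converges_at_infinity (w : X) (x : nat -> X) : Prop :=
  forall K, exists N, forall i j, (N <= i)%nat -> (N <= j)%nat ->
    gromov_product w (x i) (x j) >= K.

Definition equiv_at_infinity (w : X) (x y : nat -> X) : Prop :=
  forall K, exists N, forall i j, (N <= i)%nat -> (N <= j)%nat ->
    gromov_product w (x i) (y j) >= K.

Definition boundary_class (w : X) (x : nat -> X) : (nat -> X) -> Prop :=
  fun y => converges_at_infinity w y /\ equiv_at_infinity w x y.

Definition boundary (w : X) : Type :=
  { C : (nat -> X) -> Prop |
    exists x, converges_at_infinity w x /\ C = boundary_class w x }.

Definition boundary_close (w : X) (xi eta : boundary w) (r : R) : Prop :=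
  exists x y, proj1_sig xi x /\ proj1_sig eta y /\
    exists N, forall i j, (N <= i)%nat -> (N <= j)%nat ->
      gromov_product w (x i) (y j) >= r.

Definition boundary_open (w : X) (U : boundary w -> Prop) : Prop :=
  forall xi, U xi -> exists r, forall eta, boundary_close w xi eta r -> U eta.

End Hyp.

Definition covdim_le (Z : Type) (op : (Z -> Prop) -> Prop) (n : nat) : Prop :=
  forall cov : list (Z -> Prop),
    Forall op cov -> (forall z, exists A, In A cov /\ A z) ->
    exists ref : list (Z -> Prop),
      Forall op ref /\
      (forall z, exists B, In B ref /\ B z) /\
      (forall B, In B ref -> exists A, In A cov /\ forall z, B z -> A z) /\
      (forall (z : Z) (l : list (Z -> Prop)),
          NoDup l -> length l = S (S n) -> (forall B, In B l -> In B ref) ->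
          exists B, In B l /\ ~ B z).

(** dim Z = n  (dim of the empty space is -1, so dim = 0 requires nonemptiness) *)
Definition covdim_eq (Z : Type) (op : (Z -> Prop) -> Prop) (n : nat) : Prop :=
  covdim_le Z op n /\
  match n with 0%nat => inhabited Z | S m => ~ covdim_le Z op m end.

(* Main.v *)
Require Import Defs.
From Stdlib Require Import Reals List Lra Lia Psatz ZArith Bool Arith Classical ClassicalEpsilon ProofIrrelevance FunctionalExtensionality PropExtensionality ClassicalDescription.
Import ListNotations.

Open Scope R_scope.

Definition inZ (p : R) : Prop := exists n j : nat, (1 <= n)%nat /\ (j <= n)%nat /\
   p = 3 * INR n + INR j / (INR n * INR n).

Definition valid (p h : R) : Prop := (inZ p /\ 0 < h < 1) \/ (p = 0 /\ h = 1).

Record pt := mkpt { px : R; ph : R; pv : valid px ph }.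
Arguments mkpt : clear implicits.

Ltac dcase := repeat match goal with |- context [Rle_dec ?a ?b] => destruct (Rle_dec a b) | H : context [Rle_dec ?a ?b] |- _ => destruct (Rle_dec a b) end.

Definition NN (x y : pt) : R := Rmin (Rabs (px x - px y) + Rmax (ph x) (ph y)) 1.
Definition dd (x y : pt) : R := 2 * ln (NN x y) - ln (ph x) - ln (ph y).

Lemma ph_pos x : 0 < ph x.
Proof. destruct x as [p h v]; simpl; destruct v as [[_ H]|[_ H]]; lra. Qed.
Lemma ph_le1 x : ph x <= 1.
Proof. destruct x as [p h v]; simpl; destruct v as [[_ H]|[_ H]]; lra. Qed.

Lemma pt_eq (x y : pt) : px x = px y -> ph x = ph y -> x = y.
Proof.
  destruct x as [p h v], y as [p' h' v']; simpl; intros -> ->.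
  f_equal; apply proof_irrelevance.
Qed.

Lemma NN_ge_max x y : Rmax (ph x) (ph y) <= NN x y.
Proof.
  unfold NN. pose proof (ph_le1 x); pose proof (ph_le1 y).
  pose proof (Rabs_pos (px x - px y)).
  apply Rmin_glb; [lra|]. apply Rmax_lub; lra.
Qed.
Lemma NN_ge_x x y : ph x <= NN x y.
Proof. pose proof (NN_ge_max x y); pose proof (Rmax_l (ph x) (ph y)); lra. Qed.
Lemma NN_ge_y x y : ph y <= NN x y.
Proof. pose proof (NN_ge_max x y); pose proof (Rmax_r (ph x) (ph y)); lra. Qed.
Lemma NN_pos x y : 0 < NN x y.
Proof. pose proof (NN_ge_x x y); pose proof (ph_pos x); lra. Qed.
Lemma NN_le1 x y : NN x y <= 1.
Proof. unfold NN; apply Rmin_r. Qed.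
Lemma NN_sym x y : NN x y = NN y x.
Proof. unfold NN. rewrite Rabs_minus_sym, Rmax_comm. reflexivity. Qed.

Lemma abs_tri a b c : Rabs (a - c) <= Rabs (a - b) + Rabs (b - c).
Proof. replace (a - c) with ((a - b) + (b - c)) by ring. apply Rabs_triang. Qed.

Lemma NN_tri x y z : NN x z <= NN x y + NN y z.
Proof.
  unfold NN.
  pose proof (abs_tri (px x) (px y) (px z)).
  pose proof (ph_pos x); pose proof (ph_pos y); pose proof (ph_pos z).
  pose proof (Rabs_pos (px x - px y)). pose proof (Rabs_pos (px y - px z)).
  unfold Rmin, Rmax; dcase; lra.
Qed.

Lemma NN_mul_tri x y z : NN x z * ph y <= NN x y * NN y z.
Proof.
  unfold NN.
  pose proof (abs_tri (px x) (px y) (px z)).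
  pose proof (Rabs_pos (px x - px y)). pose proof (Rabs_pos (px y - px z)).
  pose proof (ph_pos x); pose proof (ph_pos y); pose proof (ph_pos z).
  pose proof (ph_le1 x); pose proof (ph_le1 y); pose proof (ph_le1 z).
  unfold Rmin, Rmax; dcase; nra.
Qed.

Lemma ln_le' a b : 0 < a -> a <= b -> ln a <= ln b.
Proof. intros Ha Hab. destruct (Req_dec a b) as [->|Hn]; [lra|].
  left; apply ln_increasing; lra. Qed.
Lemma ln_le_inv' a b : 0 < a -> 0 < b -> ln a <= ln b -> a <= b.
Proof. intros Ha Hb H. destruct (Rle_dec a b) as [|Hn]; [auto|].
  assert (ln b < ln a) by (apply ln_increasing; lra). lra. Qed.
Lemma ln_lt_inv' a b : 0 < a -> 0 < b -> ln a < ln b -> a < b.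
Proof. intros; apply ln_lt_inv; auto. Qed.

Lemma dd_sym x y : dd x y = dd y x.
Proof. unfold dd. rewrite NN_sym. ring. Qed.

Lemma dd_tri x y z : dd x z <= dd x y + dd y z.
Proof.
  unfold dd.
  pose proof (NN_mul_tri x y z).
  pose proof (NN_pos x z); pose proof (NN_pos x y); pose proof (NN_pos y z); pose proof (ph_pos y).
  assert (ln (NN x z * ph y) <= ln (NN x y * NN y z)) by (apply ln_le'; [nra|auto]).
  rewrite !ln_mult in H4 by auto. lra.
Qed.

Lemma dd_self x : dd x x = 0.
Proof.
  unfold dd, NN. rewrite Rminus_diag, Rabs_R0, Rmax_left by lra.
  rewrite Rplus_0_l, Rmin_left by apply ph_le1. ring.
Qed.

Lemma dd_eq0 x y : dd x y = 0 <-> x = y.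
Proof.
  split; [|intros ->; apply dd_self].
  unfold dd; intro H.
  pose proof (NN_ge_x x y); pose proof (NN_ge_y x y); pose proof (ph_pos x); pose proof (ph_pos y).
  pose proof (ln_le' _ _ H2 H0). pose proof (ln_le' _ _ H3 H1).
  assert (E1 : ln (ph x) = ln (NN x y)) by lra.
  assert (E2 : ln (ph y) = ln (NN x y)) by lra.
  apply ln_inv in E1; [|lra|apply NN_pos]. apply ln_inv in E2; [|lra|apply NN_pos].
  assert (Hh : ph x = ph y) by congruence.
  apply pt_eq; auto.
  pose proof (pv x) as vx; pose proof (pv y) as vy.
  unfold NN in E1. rewrite Hh, Rmax_left in E1 by lra.
  destruct vx as [[_ Hv]|[Hp Hv]], vy as [[_ Hv']|[Hp' Hv']]; try lra.
  - unfold Rmin in E1. destruct (Rle_dec (Rabs (px x - px y) + ph y) 1); [|lra].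
    assert (HA : Rabs (px x - px y) = 0) by lra.
    destruct (Req_dec (px x) (px y)); auto. apply Rabs_no_R0 in HA; [contradiction| lra].
Qed.

Definition X : MetricSpace := Defs.Build_MetricSpace pt dd dd_eq0 dd_sym dd_tri.

Lemma ptol a b c e p q : 0 < a -> 0 < b -> 0 < c -> 0 < e -> 0 < p -> 0 < q ->
  p <= a + b -> p <= c + e -> q <= b + c -> q <= a + e ->
  p * q <= 4 * Rmax (a * c) (b * e).
Proof.
  intros. assert (a*c <= Rmax (a*c) (b*e)) by apply Rmax_l.
  assert (b*e <= Rmax (a*c) (b*e)) by apply Rmax_r.
  assert (K : (a <= b /\ a <= e) \/ (b <= a /\ b <= c) \/ (c <= b /\ c <= e) \/ (e <= a /\ e <= c)).
  { destruct (Rle_dec a b), (Rle_dec a e), (Rle_dec b c), (Rle_dec c e), (Rle_dec a c), (Rle_dec b e); lra. }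
  destruct K as [[K1 K2]|[[K1 K2]|[[K1 K2]|[K1 K2]]]].
  - assert (p <= 2*b) by lra. assert (q <= 2*e) by lra.
    apply Rle_trans with ((2*b)*(2*e)); [apply Rmult_le_compat; lra| nra].
  - assert (p <= 2*a) by lra. assert (q <= 2*c) by lra.
    apply Rle_trans with ((2*a)*(2*c)); [apply Rmult_le_compat; lra| nra].
  - assert (p <= 2*e) by lra. assert (q <= 2*b) by lra.
    apply Rle_trans with ((2*e)*(2*b)); [apply Rmult_le_compat; lra| nra].
  - assert (p <= 2*c) by lra. assert (q <= 2*a) by lra.
    apply Rle_trans with ((2*c)*(2*a)); [apply Rmult_le_compat; lra| nra].
Qed.

Lemma four_point x y z w :
  dd x z + dd y w <= Rmax (dd x y + dd z w) (dd x w + dd y z) + 2 * ln 4.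
Proof.
  pose proof (ptol (NN x y) (NN y z) (NN z w) (NN x w) (NN x z) (NN y w)
    (NN_pos _ _) (NN_pos _ _) (NN_pos _ _) (NN_pos _ _) (NN_pos _ _) (NN_pos _ _)
    (NN_tri x y z) ltac:(rewrite (NN_sym z w); rewrite (Rplus_comm (NN w z)); apply NN_tri)
    (NN_tri y z w) ltac:(rewrite (NN_sym x y); apply NN_tri)) as H.
  pose proof (NN_pos x y); pose proof (NN_pos y z); pose proof (NN_pos z w); pose proof (NN_pos x w);
  pose proof (NN_pos x z); pose proof (NN_pos y w).
  unfold dd.
  set (a := NN x y) in *; set (b := NN y z) in *; set (c := NN z w) in *; set (e := NN x w) in *;
  set (p := NN x z) in *; set (q := NN y w) in *.
  assert (Hm : ln (p * q) <= ln 4 + Rmax (ln (a * c)) (ln (b * e))).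
  { unfold Rmax in *. destruct (Rle_dec (a * c) (b * e)) as [r|r];
    destruct (Rle_dec (ln (a * c)) (ln (b * e))) as [r'|r'].
    - rewrite <- ln_mult by nra. apply ln_le'; nra.
    - exfalso. apply r'. apply ln_le'; nra.
    - assert (ln (b*e) <= ln (a*c)) by (apply ln_le'; nra).
      assert (a*c = b*e) by (apply ln_inv; nra). lra.
    - rewrite <- ln_mult by nra. apply ln_le'; nra. }
  rewrite !ln_mult in Hm by lra.
  unfold Rmax in *. destruct (Rle_dec (ln a + ln c) (ln b + ln e)); dcase; lra.
Qed.

Lemma ln4_pos : 0 <= ln 4.
Proof. rewrite <- ln_1. apply ln_le'; lra. Qed.

Lemma X_hyp : gromov_hyperbolic X.
Proof.
  exists (ln 4). split; [apply ln4_pos|].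
  intros x y z w. unfold gromov_product. cbn.
  pose proof (four_point x y z w).
  unfold Rmin, Rmax in *. dcase; lra.
Qed.

Definition x0 : pt := mkpt 0 1 (or_intror (conj eq_refl eq_refl)).

Lemma dd_col x y : px x = px y -> dd x y = Rabs (ln (ph x) - ln (ph y)).
Proof.
  intro E. unfold dd, NN. rewrite E, Rminus_diag, Rabs_R0, Rplus_0_l.
  pose proof (ph_pos x); pose proof (ph_pos y); pose proof (ph_le1 x); pose proof (ph_le1 y).
  rewrite Rmin_left by (apply Rmax_lub; lra).
  unfold Rmax; destruct (Rle_dec (ph x) (ph y)).
  - assert (ln (ph x) <= ln (ph y)) by (apply ln_le'; lra).
    rewrite Rabs_left1 by lra. lra.
  - assert (ln (ph y) <= ln (ph x)) by (apply ln_le'; lra).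
    rewrite Rabs_right by lra. lra.
Qed.

Lemma dd_x0 y : dd x0 y = - ln (ph y).
Proof.
  unfold dd, NN; simpl. rewrite Rmax_left by apply ph_le1.
  rewrite Rmin_right by (pose proof (Rabs_pos (0 - px y)); lra).
  rewrite ln_1. ring.
Qed.


Lemma ln_ph_le0 x : ln (ph x) <= 0.
Proof. rewrite <- ln_1. apply ln_le'; [apply ph_pos| apply ph_le1]. Qed.

Lemma inZ3 : inZ 3.
Proof. exists 1%nat, 0%nat. repeat split; try lia. simpl. field. Qed.

Lemma exp_neg_lt1 t : 0 < t -> 0 < exp (- t) < 1.
Proof. intro. split; [apply exp_pos|]. rewrite <- exp_0. apply exp_increasing. lra. Qed.

Definition ray (p : R) (Hp : inZ p) (t : R) : pt :=
  match Rlt_dec 0 t with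
  | left H => mkpt p (exp (- t)) (or_introl (conj Hp (exp_neg_lt1 t H)))
  | right _ => x0
  end.

Lemma ray_px p Hp t : 0 < t -> px (ray p Hp t) = p.
Proof. intro H. unfold ray. destruct (Rlt_dec 0 t); [reflexivity|lra]. Qed.
Lemma ray_ph p Hp t : 0 < t -> ph (ray p Hp t) = exp (- t).
Proof. intro H. unfold ray. destruct (Rlt_dec 0 t); [reflexivity|lra]. Qed.
Lemma ray_0 p Hp t : t <= 0 -> ray p Hp t = x0.
Proof. intro H. unfold ray. destruct (Rlt_dec 0 t); [exfalso; lra|reflexivity]. Qed.

Lemma ray_geo p Hp : geodesic_ray X (ray p Hp).
Proof.
  intros s t Hs Ht. change (dd (ray p Hp s) (ray p Hp t) = Rabs (s - t)).
  destruct (Rle_lt_dec s 0) as [s0|s0]; destruct (Rle_lt_dec t 0) as [t0|t0].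
  - rewrite !ray_0 by lra. rewrite dd_self. replace (s - t) with 0 by lra. rewrite Rabs_R0; auto.
  - rewrite (ray_0 _ _ s) by lra. rewrite dd_x0, ray_ph, ln_exp by lra.
    replace s with 0 by lra. rewrite Rabs_left by lra. ring.
  - rewrite (ray_0 _ _ t) by lra. rewrite dd_sym, dd_x0, ray_ph, ln_exp by lra.
    replace t with 0 by lra. rewrite Rabs_right by lra. ring.
  - rewrite dd_col by (rewrite !ray_px; auto). rewrite !ray_ph, !ln_exp by auto.
    rewrite <- Rabs_Ropp. f_equal. ring.
Qed.

Lemma X_visual : visual X.
Proof.
  exists x0, 1. split; [lra|]. intro x.
  destruct (pv x) as [[Hp Hh]|[Hp Hh]].
  - exists (ray (px x) Hp). split; [apply ray_geo|]. split; [apply ray_0; lra|].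
    intros eps He. exists (- ln (ph x)). split.
    + pose proof (ln_ph_le0 x); lra.
    + cbn. assert (0 < - ln (ph x)).
      { assert (ln (ph x) < ln 1) by (apply ln_increasing; lra). rewrite ln_1 in H; lra. }
      assert (ray (px x) Hp (- ln (ph x)) = x).
      { apply pt_eq. rewrite ray_px; auto. rewrite ray_ph by auto.
        rewrite Ropp_involutive, exp_ln; auto. lra. }
      rewrite H0, dd_self. lra.
  - exists (ray 3 inZ3). split; [apply ray_geo|]. split; [apply ray_0; lra|].
    intros eps He. exists 0. split; [lra|]. rewrite ray_0 by lra.
    assert (x = x0) by (apply pt_eq; simpl; auto). subst. cbn. rewrite dd_self. lra.
Qed.

Lemma frac_bounds n j : (1 <= n)%nat -> (j <= n)%nat -> 0 <= INR j / (INR n * INR n) <= 1.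
Proof.
  intros Hn Hj. apply le_INR in Hn, Hj. simpl in Hn.
  pose proof (pos_INR j).
  split.
  - apply Rmult_le_pos; [lra|]. left; apply Rinv_0_lt_compat; nra.
  - apply Rmult_le_reg_r with (INR n * INR n); [nra|].
    unfold Rdiv. rewrite Rmult_assoc, Rinv_l by nra. nra.
Qed.

Lemma nat_close a b : Rabs (INR a - INR b) < 1 -> a = b.
Proof.
  intro H. destruct (Nat.lt_total a b) as [h|[h|h]]; auto; exfalso.
  - apply le_INR in h. rewrite S_INR in h. rewrite Rabs_left in H by lra. lra.
  - apply le_INR in h. rewrite S_INR in h. rewrite Rabs_right in H by lra. lra.
Qed.

Lemma same_cluster n j n' j' : (1 <= n)%nat -> (j <= n)%nat -> (1 <= n')%nat -> (j' <= n')%nat ->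
  Rabs ((3 * INR n + INR j / (INR n * INR n)) - (3 * INR n' + INR j' / (INR n' * INR n'))) < 1 ->
  n = n'.
Proof.
  intros H1 H2 H3 H4 H.
  pose proof (frac_bounds _ _ H1 H2); pose proof (frac_bounds _ _ H3 H4).
  destruct (Nat.lt_total n n') as [h|[h|h]]; auto; exfalso.
  - apply le_INR in h. rewrite S_INR in h. apply Rabs_def2 in H. lra.
  - apply le_INR in h. rewrite S_INR in h. apply Rabs_def2 in H. lra.
Qed.

Lemma Z_iso_unif p : inZ p -> exists eps, 0 < eps /\ forall q r, inZ q -> inZ r ->
  Rabs (p - q) < 1 -> Rabs (p - r) < 1 -> Rabs (q - r) < eps -> q = r.
Proof.
  intros (n & j & Hn & Hj & ->).
  assert (Hn' : 1 <= INR n) by (apply le_INR in Hn; simpl in Hn; lra).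
  exists (/ (INR n * INR n)). split; [apply Rinv_0_lt_compat; nra|].
  intros q r (n1 & j1 & Hn1 & Hj1 & ->) (n2 & j2 & Hn2 & Hj2 & ->) Hq Hr Hqr.
  pose proof (same_cluster _ _ _ _ Hn Hj Hn1 Hj1 Hq).
  pose proof (same_cluster _ _ _ _ Hn Hj Hn2 Hj2 Hr). subst n1 n2.
  assert (j1 = j2).
  { apply nat_close.
    replace (INR j1 - INR j2) with
      ((3 * INR n + INR j1 / (INR n * INR n) - (3 * INR n + INR j2 / (INR n * INR n))) * (INR n * INR n))
      by (field; lra).
    rewrite Rabs_mult, (Rabs_right (INR n * INR n)) by nra.
    apply Rmult_lt_reg_r with (/ (INR n * INR n)); [apply Rinv_0_lt_compat; nra|].
    rewrite Rmult_assoc, Rinv_r, Rmult_1_r, Rmult_1_l by nra. exact Hqr. }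
  subst; reflexivity.
Qed.

Lemma Z_iso p : inZ p -> exists eps, 0 < eps /\ forall q, inZ q -> Rabs (p - q) < eps -> q = p.
Proof.
  intro Hp. destruct (Z_iso_unif p Hp) as (e & He & H).
  exists (Rmin e 1). split; [apply Rmin_glb_lt; lra|].
  intros q Hq Hpq. pose proof (Rmin_l e 1); pose proof (Rmin_r e 1).
  apply (H q p Hq Hp); try lra.
  - rewrite Rminus_diag, Rabs_R0; lra.
  - rewrite Rabs_minus_sym; lra.
Qed.

Lemma inZ_not0 : ~ inZ 0.
Proof.
  intros (n & j & Hn & Hj & E). pose proof (frac_bounds _ _ Hn Hj).
  apply le_INR in Hn; simpl in Hn. lra.
Qed.

Lemma exp_le' a b : a <= b -> exp a <= exp b.
Proof. intro H. destruct (Req_dec a b) as [->|]; [lra|]. left; apply exp_increasing; lra. Qed.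

Lemma dd_x0' x : dd x x0 = - ln (ph x).
Proof. rewrite dd_sym; apply dd_x0. Qed.
Lemma dd_unf x y : dd x y = 2 * ln (NN x y) - ln (ph x) - ln (ph y).
Proof. reflexivity. Qed.

Lemma gp_lower w x y : gromov_product X w x y >= - ln (NN x y) - dd w x0.
Proof.
  unfold gromov_product; cbn.
  pose proof (dd_tri x w x0); pose proof (dd_tri y w x0).
  rewrite !dd_x0' in *. rewrite (dd_unf x y). lra.
Qed.

Lemma gp_upper w x y : gromov_product X w x y <= - ln (NN x y) + dd w x0.
Proof.
  unfold gromov_product; cbn.
  pose proof (dd_tri x x0 w); pose proof (dd_tri y x0 w).
  rewrite (dd_sym x0 w) in *. rewrite !dd_x0' in *. rewrite (dd_unf x y). lra.
Qed.

Lemma gp_NN_le w a b r : gromov_product X w a b >= r -> NN a b <= exp (dd w x0 - r).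
Proof.
  intro H. pose proof (gp_upper w a b). rewrite <- (exp_ln (NN a b)) by apply NN_pos.
  apply exp_le'. lra.
Qed.

Lemma NN_le_gp w a b r : NN a b <= exp (- (r + dd w x0)) -> gromov_product X w a b >= r.
Proof.
  intro H. pose proof (gp_lower w a b).
  apply ln_le' in H; [|apply NN_pos]. rewrite ln_exp in H. lra.
Qed.

Lemma NN_small_px a b : NN a b < 1 -> Rabs (px a - px b) <= NN a b.
Proof.
  unfold NN. pose proof (ph_pos a). pose proof (Rmax_l (ph a) (ph b)).
  unfold Rmin. destruct (Rle_dec _ _); lra.
Qed.

Lemma NN_small_inZ a b : NN a b < 1 -> inZ (px a).
Proof.
  intro H. pose proof (NN_ge_x a b).
  destruct (pv a) as [[Hp _]|[_ Hh]]; auto. lra.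
Qed.

Lemma NN_col_le a b : px a = px b -> NN a b <= Rmax (ph a) (ph b).
Proof.
  intro E. unfold NN. rewrite E, Rminus_diag, Rabs_R0, Rplus_0_l. apply Rmin_l.
Qed.

Lemma NN_self a : NN a a = ph a.
Proof.
  unfold NN. rewrite Rminus_diag, Rabs_R0, Rplus_0_l, Rmax_left by lra.
  apply Rmin_left; apply ph_le1.
Qed.

Definition colseq (x : nat -> pt) (p : R) : Prop :=
  inZ p /\ (exists N, forall i, (N <= i)%nat -> px (x i) = p) /\
  (forall eps, 0 < eps -> exists N, forall i, (N <= i)%nat -> ph (x i) <= eps).

Lemma conv_NN w x : converges_at_infinity X w x -> forall eps, 0 < eps ->
  exists N, forall i j, (N <= i)%nat -> (N <= j)%nat -> NN (x i) (x j) <= eps.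
Proof.
  intros H eps He. destruct (H (dd w x0 - ln eps)) as [N HN].
  exists N. intros i j Hi Hj. specialize (HN i j Hi Hj).
  apply gp_NN_le in HN. replace (dd w x0 - (dd w x0 - ln eps)) with (ln eps) in HN by ring.
  rewrite exp_ln in HN; auto.
Qed.

Lemma equiv_NN w x y : equiv_at_infinity X w x y -> forall eps, 0 < eps ->
  exists N, forall i j, (N <= i)%nat -> (N <= j)%nat -> NN (x i) (y j) <= eps.
Proof.
  intros H eps He. destruct (H (dd w x0 - ln eps)) as [N HN].
  exists N. intros i j Hi Hj. specialize (HN i j Hi Hj).
  apply gp_NN_le in HN. replace (dd w x0 - (dd w x0 - ln eps)) with (ln eps) in HN by ring.
  rewrite exp_ln in HN; auto.
Qed.

Lemma conv_col w x : converges_at_infinity X w x -> exists p, colseq x p.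
Proof.
  intro H.
  destruct (conv_NN w x H (1/2) ltac:(lra)) as [N0 H0].
  assert (Hp0 : inZ (px (x N0))) by (apply (NN_small_inZ _ (x N0)); specialize (H0 N0 N0 (le_n _) (le_n _)); lra).
  destruct (Z_iso_unif _ Hp0) as (e & He & Hiso).
  destruct (conv_NN w x H (Rmin (e/2) (1/2)) ltac:(apply Rmin_glb_lt; lra)) as [N1 H1].
  pose proof (Rmin_l (e/2) (1/2)); pose proof (Rmin_r (e/2) (1/2)).
  set (M := Nat.max N0 N1).
  exists (px (x M)). split; [|split].
  - apply (NN_small_inZ _ (x M)). specialize (H1 M M ltac:(lia) ltac:(lia)). lra.
  - exists M. intros i Hi.
    apply Hiso.
    + apply (NN_small_inZ _ (x M)). specialize (H1 i M ltac:(lia) ltac:(lia)). lra.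
    + apply (NN_small_inZ _ (x M)). specialize (H1 M M ltac:(lia) ltac:(lia)). lra.
    + specialize (H0 N0 i ltac:(lia) ltac:(lia)). pose proof (NN_small_px (x N0) (x i)). lra.
    + specialize (H0 N0 M ltac:(lia) ltac:(lia)). pose proof (NN_small_px (x N0) (x M)). lra.
    + specialize (H1 i M ltac:(lia) ltac:(lia)). pose proof (NN_small_px (x i) (x M)). lra.
  - intros eps Heps. destruct (conv_NN w x H eps Heps) as [N HN]. exists N. intros i Hi.
    specialize (HN i i Hi Hi). rewrite NN_self in HN. auto.
Qed.

Lemma colseq_equiv w x y p : colseq x p -> colseq y p -> equiv_at_infinity X w x y.
Proof.
  intros (_ & [Nx Hx] & Hhx) (_ & [Ny Hy] & Hhy) K.
  set (eps := exp (- (K + dd w x0))). assert (0 < eps) by apply exp_pos.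
  destruct (Hhx eps H) as [N1 H1]; destruct (Hhy eps H) as [N2 H2].
  exists (Nat.max (Nat.max Nx Ny) (Nat.max N1 N2)). intros i j Hi Hj.
  apply NN_le_gp. fold eps.
  eapply Rle_trans; [apply NN_col_le|].
  - rewrite Hx, Hy by lia. reflexivity.
  - apply Rmax_lub; [apply H1|apply H2]; lia.
Qed.

Lemma colseq_conv w x p : colseq x p -> converges_at_infinity X w x.
Proof. intro H. exact (colseq_equiv w x x p H H). Qed.

Lemma equiv_col w x y p q : colseq x p -> colseq y q -> equiv_at_infinity X w x y -> p = q.
Proof.
  intros Hx Hy He.
  destruct Hx as (Hp & [Nx Hx] & _); destruct Hy as (Hq & [Ny Hy] & _).
  destruct (Z_iso p Hp) as (e & He0 & Hiso).
  set (eps := Rmin (e/2) (1/2)).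
  assert (0 < eps) by (apply Rmin_glb_lt; lra).
  pose proof (Rmin_l (e/2) (1/2)); pose proof (Rmin_r (e/2) (1/2)).
  destruct (equiv_NN w x y He eps H) as [N HN].
  set (M := Nat.max N (Nat.max Nx Ny)).
  specialize (HN M M ltac:(lia) ltac:(lia)).
  pose proof (NN_small_px (x M) (y M) ltac:(unfold eps in HN; lra)).
  rewrite Hx, Hy in H2 by lia.
  symmetry. apply Hiso; auto. unfold eps in *; lra.
Qed.

Lemma bclass_eq w x y p : colseq x p -> colseq y p -> boundary_class X w x = boundary_class X w y.
Proof.
  intros Hx Hy. apply functional_extensionality. intro z. apply propositional_extensionality.
  unfold boundary_class. split; intros [Hz Hxz]; split; auto.
  - destruct (conv_col w z Hz) as [s Hs].
    pose proof (equiv_col w x z p s Hx Hs Hxz). subst s.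
    apply (colseq_equiv w y z p Hy Hs).
  - destruct (conv_col w z Hz) as [s Hs].
    pose proof (equiv_col w y z p s Hy Hs Hxz). subst s.
    apply (colseq_equiv w x z p Hx Hs).
Qed.

Lemma exist_irrel (A : Type) (P : A -> Prop) (a b : A) (pa : P a) (pb : P b) :
  a = b -> exist P a pa = exist P b pb.
Proof. intros ->. f_equal. apply proof_irrelevance. Qed.

Lemma boundary_iso w (xi : boundary X w) : exists r, forall eta, boundary_close X w xi eta r -> eta = xi.
Proof.
  destruct xi as [C HC]. destruct HC as (x & Hxc & HCx) eqn:EHC.
  destruct (conv_col w x Hxc) as [p Hp].
  pose proof Hp as Hp'. destruct Hp' as (HpZ & _ & _).
  destruct (Z_iso p HpZ) as (e & He0 & Hiso).
  set (eps := Rmin (e/2) (1/2)).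
  assert (Heps : 0 < eps) by (apply Rmin_glb_lt; lra).
  pose proof (Rmin_l (e/2) (1/2)); pose proof (Rmin_r (e/2) (1/2)).
  exists (dd w x0 - ln eps).
  intros [D HD] Hclose.
  destruct Hclose as (x' & y' & Hx' & Hy' & N & HN). simpl in Hx', Hy'.
  destruct HD as (y'' & Hyc & HDy).
  rewrite HCx in Hx'. rewrite HDy in Hy'.
  destruct Hx' as [Hx'c Hxx']. destruct Hy' as [Hy'c Hyy'].
  destruct (conv_col w x' Hx'c) as [p' Hp'].
  destruct (conv_col w y' Hy'c) as [q Hq].
  destruct (conv_col w y'' Hyc) as [q'' Hq''].
  pose proof (equiv_col w x x' p p' Hp Hp' Hxx'). subst p'.
  pose proof (equiv_col w y'' y' q'' q Hq'' Hq Hyy'). subst q''.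
  assert (q = p).
  { destruct Hp' as (_ & [Nx Hx] & _); destruct Hq as (HqZ & [Ny Hy] & _).
    set (M := Nat.max N (Nat.max Nx Ny)).
    specialize (HN M M ltac:(lia) ltac:(lia)).
    apply gp_NN_le in HN. replace (dd w x0 - (dd w x0 - ln eps)) with (ln eps) in HN by ring.
    rewrite exp_ln in HN by auto.
    pose proof (NN_small_px (x' M) (y' M) ltac:(unfold eps in HN; lra)) as Hd.
    rewrite Hx, Hy in Hd by lia. apply Hiso; auto. unfold eps in *; lra. }
  subst q.
  apply exist_irrel.
  rewrite HDy, HCx. apply (bclass_eq w y'' x p); auto.
Qed.

Lemma boundary_all_open w (U : boundary X w -> Prop) : boundary_open X w U.
Proof.
  intros xi Hxi. destruct (boundary_iso w xi) as [r Hr]. exists r.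
  intros eta He. rewrite (Hr eta He). auto.
Qed.

Section Disj.
Variable Z : Type.
Fixpoint disj (l : list (Z -> Prop)) : list (Z -> Prop) :=
  match l with
  | [] => []
  | A :: l' => A :: map (fun B z => B z /\ ~ A z) (disj l')
  end.

Lemma disj_cover l z : (exists A, In A l /\ A z) -> exists B, In B (disj l) /\ B z.
Proof.
  induction l as [|A l IH]; intros (A' & HA & Hz); [destruct HA|].
  destruct (classic (A z)).
  - exists A. split; [left|]; auto.
  - destruct HA as [<-|HA]; [contradiction|].
    destruct IH as (B & HB & HBz); [eauto|].
    exists (fun z => B z /\ ~ A z). split; [right; apply in_map_iff; eauto|auto].
Qed.

Lemma disj_sub l B : In B (disj l) -> exists A, In A l /\ forall z, B z -> A z.
Proof.
  revert B; induction l as [|A l IH]; simpl; [tauto|]. intros B [<-|HB].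
  - exists A. split; auto.
  - apply in_map_iff in HB. destruct HB as (B' & <- & HB').
    destruct (IH B' HB') as (A' & HA' & Hs). exists A'. split; auto. intros z [Hz _]; auto.
Qed.

Lemma disj_disjoint l B1 B2 z : In B1 (disj l) -> In B2 (disj l) -> B1 z -> B2 z -> B1 = B2.
Proof.
  revert B1 B2. induction l as [|A l IH]; simpl; [tauto|]. intros B1 B2 H1 H2 z1 z2.
  destruct H1 as [<-|H1]; destruct H2 as [<-|H2]; auto.
  - apply in_map_iff in H2. destruct H2 as (B' & <- & _). destruct z2; contradiction.
  - apply in_map_iff in H1. destruct H1 as (B' & <- & _). destruct z1; contradiction.
  - apply in_map_iff in H1. destruct H1 as (B1' & <- & H1).
    apply in_map_iff in H2. destruct H2 as (B2' & <- & H2).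
    destruct z1, z2. rewrite (IH B1' B2'); auto.
Qed.

Lemma covdim0_all_open (op : (Z -> Prop) -> Prop) : (forall U, op U) -> covdim_le Z op 0.
Proof.
  intros Hop cov _ Hcov. exists (disj cov). split; [|split; [|split]].
  - apply Forall_forall; auto.
  - intro z. apply disj_cover; auto.
  - intros B HB. apply disj_sub; auto.
  - intros z l Hnd Hlen Hin.
    destruct l as [|B1 [|B2 [|]]]; simpl in Hlen; try discriminate.
    destruct (classic (B1 z)) as [h1|h1]; [|exists B1; split; [left|]; auto].
    destruct (classic (B2 z)) as [h2|h2]; [|exists B2; split; [right; left|]; auto].
    exfalso. inversion Hnd; subst. apply H1. left.
    symmetry. apply (disj_disjoint cov B1 B2 z); auto; apply Hin; simpl; auto.
Qed.
End Disj.

Lemma boundary_inhabited w : inhabited (boundary X w).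
Proof.
  set (x := fun i : nat => ray 3 inZ3 (INR i + 1)).
  assert (Hx : colseq x 3).
  { split; [apply inZ3|split].
    - exists 0%nat. intros i _. unfold x. apply ray_px. pose proof (pos_INR i); lra.
    - intros eps He. destruct (INR_unbounded (- ln eps)) as [N HN]. exists N. intros i Hi.
      unfold x. rewrite ray_ph by (pose proof (pos_INR i); lra).
      apply le_INR in Hi. rewrite <- (exp_ln eps) by auto. apply exp_le'. lra. }
  constructor. exists (boundary_class X w x). exists x. split; auto. apply (colseq_conv w x 3 Hx).
Qed.

Lemma X_boundary w : covdim_eq (boundary X w) (boundary_open X w) 0.
Proof.
  split.
  - apply covdim0_all_open. apply boundary_all_open.
  - apply boundary_inhabited.
Qed.

Module Sperner.
Open Scope nat_scope.

Inductive col := K1 | K2 | K3.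

Definition e (a b : col) : bool :=
  match a, b with K1, K2 | K2, K1 => true | _, _ => false end.
Definition rb (a b c : col) : bool :=
  match a, b, c with
  | K1, K2, K3 | K1, K3, K2 | K2, K1, K3 | K2, K3, K1 | K3, K1, K2 | K3, K2, K1 => true
  | _, _, _ => false end.

Lemma tri_par a b c : xorb (xorb (e a b) (e b c)) (e a c) = rb a b c.
Proof. destruct a, b, c; reflexivity. Qed.

Fixpoint xs (f : nat -> bool) (n : nat) : bool :=
  match n with 0 => false | S n => xorb (xs f n) (f n) end.

Lemma xs_ext f g n : (forall i, i < n -> f i = g i) -> xs f n = xs g n.
Proof. induction n; simpl; intros; auto. rewrite IHn, H; auto. Qed.

Lemma xs_xor f g n : xs (fun i => xorb (f i) (g i)) n = xorb (xs f n) (xs g n).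
Proof.
  induction n; simpl; auto. rewrite IHn.
  destruct (xs f n), (xs g n), (f n), (g n); reflexivity.
Qed.

Lemma xs_tele f n : xs (fun i => xorb (f i) (f (S i))) n = xorb (f 0) (f n).
Proof.
  induction n; simpl. { destruct (f 0); auto. }
  rewrite IHn. destruct (f 0), (f n), (f (S n)); reflexivity.
Qed.

Lemma xs_false f n : (forall i, i < n -> f i = false) -> xs f n = false.
Proof. induction n; simpl; intros; auto. rewrite IHn, H; auto. Qed.


Lemma xs_true f n : xs f n = true -> exists i, i < n /\ f i = true.
Proof.
  induction n; simpl; intros H; [discriminate|].
  destruct (f n) eqn:E.
  - exists n; split; auto.
  - rewrite xorb_false_r in H. destruct (IHn H) as (i & Hi & Hf). exists i; split; auto.
Qed.

Definition v (a : col) : bool := match a with K2 => true | _ => false end.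
Definition in12 (a : col) : Prop := a = K1 \/ a = K2.

Lemma e_v a b : in12 a -> in12 b -> e a b = xorb (v a) (v b).
Proof. intros [-> | ->] [-> | ->]; reflexivity. Qed.

Lemma path_par (f : nat -> col) n : (forall i, i <= n -> in12 (f i)) ->
  xs (fun i => e (f i) (f (S i))) n = xorb (v (f 0)) (v (f n)).
Proof.
  intro H. rewrite (xs_ext _ (fun i => xorb (v (f i)) (v (f (S i))))).
  - apply (xs_tele (fun i => v (f i))).
  - intros i Hi. apply e_v; apply H; lia.
Qed.

Section Sp.
Variable c : nat -> nat -> col.
Variables W J h : nat.
Hypothesis Hh : h <= W.
Hypothesis HA : forall i, i <= h -> c i 0 <> K1.
Hypothesis HB : forall i, h <= i -> i <= W -> c i 0 <> K2.
Hypothesis HL : forall k, k <= J -> in12 (c 0 k).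
Hypothesis HR : forall k, k <= J -> in12 (c W k).
Hypothesis HT : forall i, i <= W -> in12 (c i J).
Hypothesis H00 : c 0 0 = K2.
Hypothesis HW0 : c W 0 = K1.

Definition rb1 i k := rb (c i k) (c (S i) k) (c (S i) (S k)).
Definition rb2 i k := rb (c i k) (c i (S k)) (c (S i) (S k)).

Lemma sperner : exists i k, i < W /\ k < J /\ (rb1 i k = true \/ rb2 i k = true).
Proof.
  set (H := fun i k => e (c i k) (c (S i) k)).
  set (V := fun i k => e (c i k) (c i (S k))).
  assert (Hsq : forall i k, xorb (rb1 i k) (rb2 i k) =
     xorb (xorb (H i k) (H i (S k))) (xorb (V i k) (V (S i) k))).
  { intros i k. unfold rb1, rb2. rewrite <- !tri_par. unfold H, V.
    destruct (e (c i k) (c (S i) k)), (e (c (S i) k) (c (S i) (S k))),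
      (e (c i k) (c (S i) (S k))), (e (c i k) (c i (S k))), (e (c i (S k)) (c (S i) (S k)));
      reflexivity. }
  assert (Htot : xs (fun i => xs (fun k => xorb (rb1 i k) (rb2 i k)) J) W = true).
  { rewrite (xs_ext _ (fun i => xorb (xorb (H i 0) (H i J))
          (xorb (xs (fun k => V i k) J) (xs (fun k => V (S i) k) J)))).
    2:{ intros i _. rewrite (xs_ext _ _ _ (fun k _ => Hsq i k)).
        rewrite xs_xor. rewrite (xs_tele (fun k => H i k)). rewrite xs_xor. reflexivity. }
    rewrite xs_xor, xs_xor, xs_xor.
    rewrite <- (xs_xor (fun i => xs (fun k => V i k) J) (fun i => xs (fun k => V (S i) k) J)).
    rewrite (xs_tele (fun i => xs (fun k => V i k) J)).
    assert (Hbot : xs (fun i => H i 0) W = false).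
    { apply xs_false. intros i Hi. unfold H.
      destruct (le_lt_dec (S i) h).
      - pose proof (HA i ltac:(lia)); pose proof (HA (S i) l).
        destruct (c i 0), (c (S i) 0); try reflexivity; congruence.
      - pose proof (HB (S i) ltac:(lia) ltac:(lia)).
        destruct (le_lt_dec h i).
        + pose proof (HB i l0 ltac:(lia)).
          destruct (c i 0), (c (S i) 0); try reflexivity; congruence.
        + exfalso; lia. }
    rewrite Hbot.
    unfold H. rewrite (path_par (fun i => c i J) W) by (intros; apply HT; lia).
    unfold V. rewrite (path_par (fun k => c 0 k) J) by (intros; apply HL; lia).
    rewrite (path_par (fun k => c W k) J) by (intros; apply HR; lia).
    simpl. rewrite H00, HW0. simpl.
    destruct (v (c 0 J)), (v (c W J)); reflexivity. }
  apply xs_true in Htot. destruct Htot as (i & Hi & Hk).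
  apply xs_true in Hk. destruct Hk as (k & Hk & Hb).
  exists i, k. split; auto. split; auto.
  destruct (rb1 i k), (rb2 i k); simpl in Hb; auto; discriminate.
Qed.
End Sp.

End Sperner.
Import Sperner.
Open Scope R_scope.

Lemma edge_le3 x y : Rabs (px x - px y) <= Rmin (ph x) (ph y) ->
  ph x <= 2 * ph y -> ph y <= 2 * ph x -> dd x y <= 3.
Proof.
  intros H1 H2 H3. pose proof (ph_pos x); pose proof (ph_pos y).
  assert (HN : NN x y <= 2 * Rmax (ph x) (ph y)).
  { unfold NN. eapply Rle_trans; [apply Rmin_l|].
    pose proof (Rmin_l (ph x) (ph y)); pose proof (Rmax_l (ph x) (ph y)). lra. }
  assert (HN2 : NN x y * NN x y <= 8 * (ph x * ph y)).
  { pose proof (NN_pos x y). unfold Rmax in HN. destruct (Rle_dec _ _); nra. }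
  assert (ln (NN x y * NN x y) <= ln (8 * (ph x * ph y))) by (apply ln_le'; [pose proof (NN_pos x y); nra|auto]).
  rewrite !ln_mult in H4 by (try pose proof (NN_pos x y); nra).
  assert (ln 8 <= 3).
  { rewrite <- (ln_exp 3). apply ln_le'; [lra|].
    replace 3 with (1+1+1) by ring. rewrite !exp_plus.
    pose proof (exp_ineq1_le 1). nra. }
  unfold dd. lra.
Qed.

Lemma dd_lb_h x y : ln (ph y) - ln (ph x) <= dd x y.
Proof.
  unfold dd. pose proof (NN_ge_y x y). apply ln_le' in H; [|apply ph_pos]. lra.
Qed.

Lemma dd_lb_p x y a : 0 < a -> a <= Rabs (px x - px y) -> a <= 1 -> ln a - ln (ph x) <= dd x y.
Proof.
  intros Ha H1 H2. unfold dd.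
  pose proof (NN_ge_y x y). apply ln_le' in H; [|apply ph_pos].
  assert (a <= NN x y).
  { unfold NN. apply Rmin_glb; auto. pose proof (ph_pos x); pose proof (Rmax_l (ph x) (ph y)); lra. }
  apply ln_le' in H0; auto. lra.
Qed.

Definition nn (m : nat) : nat := (2 ^ S m)%nat.
Definition rn (m : nat) : R := INR (nn m).

Lemma rn_eq m : rn m = 2 ^ S m.
Proof. unfold rn, nn. rewrite pow_INR. reflexivity. Qed.

Lemma rn_ge2 m : 2 <= rn m.
Proof. rewrite rn_eq. simpl. pose proof (pow_R1_Rle 2 m ltac:(lra)). lra. Qed.

Definition gx m i : R := 3 * INR (nn m) + INR (Nat.min i (nn m)) / (INR (nn m) * INR (nn m)).
Definition gh m k : R := 2 ^ (Nat.min k (S m)) / (rn m * rn m).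

Lemma gx_inZ m i : inZ (gx m i).
Proof.
  exists (nn m), (Nat.min i (nn m)). split; [|split; [lia|reflexivity]].
  unfold nn. pose proof (Nat.pow_nonzero 2 (S m) ltac:(lia)). lia.
Qed.

Lemma gh_bounds m k : 0 < gh m k < 1.
Proof.
  unfold gh. pose proof (rn_ge2 m). split.
  - apply Rdiv_lt_0_compat; [apply pow_lt; lra| nra].
  - apply Rmult_lt_reg_r with (rn m * rn m); [nra|].
    unfold Rdiv. rewrite Rmult_assoc, Rinv_l, Rmult_1_l, Rmult_1_r by nra.
    assert (2 ^ Nat.min k (S m) <= rn m) by (rewrite rn_eq; apply Rle_pow; [lra|lia]).
    nra.
Qed.

Definition g (m i k : nat) : pt := mkpt (gx m i) (gh m k) (or_introl (conj (gx_inZ m i) (gh_bounds m k))).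

Lemma gx_val m i : (i <= nn m)%nat -> gx m i = 3 * rn m + INR i / (rn m * rn m).
Proof. intro H. unfold gx, rn. rewrite Nat.min_l by lia. reflexivity. Qed.
Lemma gh_val m k : (k <= S m)%nat -> gh m k = 2 ^ k / (rn m * rn m).
Proof. intro H. unfold gh. rewrite Nat.min_l by lia. reflexivity. Qed.

Lemma gh_ge m k : (k <= S m)%nat -> 1 / (rn m * rn m) <= gh m k.
Proof.
  intro H. rewrite gh_val by auto. pose proof (rn_ge2 m).
  unfold Rdiv. apply Rmult_le_compat_r; [left; apply Rinv_0_lt_compat; nra|].
  apply pow_R1_Rle; lra.
Qed.

Lemma gh_S m k : (S k <= S m)%nat -> gh m (S k) = 2 * gh m k.
Proof. intro H. rewrite !gh_val by lia. simpl. field. pose proof (rn_ge2 m). nra. Qed.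

Lemma gx_diff m i j : (i <= nn m)%nat -> (j <= nn m)%nat ->
  Rabs (gx m i - gx m j) = Rabs (INR i - INR j) / (rn m * rn m).
Proof.
  intros Hi Hj. rewrite !gx_val by auto. pose proof (rn_ge2 m).
  replace (3 * rn m + INR i / (rn m * rn m) - (3 * rn m + INR j / (rn m * rn m)))
    with ((INR i - INR j) * / (rn m * rn m)) by (field; nra).
  rewrite Rabs_mult, (Rabs_right (/ _)); [reflexivity|].
  left; apply Rinv_0_lt_compat; nra.
Qed.

Lemma grid_edge_h m i k : (S i <= nn m)%nat -> (k <= S m)%nat -> dd (g m i k) (g m (S i) k) <= 3.
Proof.
  intros Hi Hk. pose proof (rn_ge2 m). apply edge_le3; simpl.
  - rewrite gx_diff by lia. rewrite S_INR. replace (INR i - (INR i + 1)) with (Ropp 1) by ring.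
    rewrite Rabs_Ropp, Rabs_R1. rewrite Rmin_left by lra. apply gh_ge; auto.
  - pose proof (gh_bounds m k). lra.
  - pose proof (gh_bounds m k). lra.
Qed.

Lemma grid_edge_v m i k : (S k <= S m)%nat -> dd (g m i k) (g m i (S k)) <= 3.
Proof.
  intros Hk. pose proof (gh_bounds m k). apply edge_le3; simpl.
  - rewrite Rminus_diag, Rabs_R0. apply Rmin_glb; left; apply gh_bounds.
  - rewrite gh_S by auto. lra.
  - rewrite gh_S by auto. lra.
Qed.

Lemma grid_edge_d m i k : (S i <= nn m)%nat -> (S k <= S m)%nat -> dd (g m i k) (g m (S i) (S k)) <= 3.
Proof.
  intros Hi Hk. pose proof (rn_ge2 m). pose proof (gh_bounds m k). apply edge_le3; simpl.
  - rewrite gx_diff by lia. rewrite S_INR. replace (INR i - (INR i + 1)) with (Ropp 1) by ring.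
    rewrite Rabs_Ropp, Rabs_R1. rewrite gh_S by auto. rewrite Rmin_left by lra. apply gh_ge; lia.
  - rewrite gh_S by auto. lra.
  - rewrite gh_S by auto. lra.
Qed.

Lemma rb_neq a b c : rb a b c = true -> a <> b /\ b <> c /\ a <> c.
Proof. destruct a, b, c; simpl; intro H; try discriminate; repeat split; discriminate. Qed.

Lemma ln_diff a b : 0 < a -> 0 < b -> ln a - ln b = ln (a * / b).
Proof. intros. rewrite ln_mult, ln_Rinv by (try apply Rinv_0_lt_compat; auto). ring. Qed.

Lemma ln2_pos : 0 < ln 2.
Proof. rewrite <- ln_1. apply ln_increasing; lra. Qed.

Lemma mult_contra (U : (pt -> Prop) -> Prop)
  (Hmult : forall (x : pt) (l : list (pt -> Prop)), NoDup l -> length l = 3%nat ->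
     (forall A, In A l -> U A) -> exists A, In A l /\ ~ (exists y, dd x y <= 3 /\ A y))
  u A1 A2 A3 y1 y2 y3 : U A1 -> U A2 -> U A3 -> A1 <> A2 -> A2 <> A3 -> A1 <> A3 ->
  A1 y1 -> A2 y2 -> A3 y3 -> dd u y1 <= 3 -> dd u y2 <= 3 -> dd u y3 <= 3 -> False.
Proof.
  intros. destruct (Hmult u [A1; A2; A3]) as (A & HA & Hn).
  - constructor; [simpl; intuition|]. constructor; [simpl; intuition|].
    constructor; [simpl; intuition|constructor].
  - reflexivity.
  - simpl; intros A [<-|[<-|[<-|[]]]]; auto.
  - simpl in HA. destruct HA as [<-|[<-|[<-|[]]]]; apply Hn; eauto.
Qed.

Theorem not_asdim1 : ~ asdim_le X 1.
Proof.
  intro Hal. destruct (Hal 3 ltac:(lra)) as (U & Hcov & (Dm & Hbd) & Hmult).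
  assert (Hbd' : forall A, U A -> forall x y : pt, A x -> A y -> dd x y <= Dm) by exact Hbd.
  assert (Hmult' : forall (x : pt) (l : list (pt -> Prop)), NoDup l -> length l = 3%nat ->
     (forall A, In A l -> U A) -> exists A, In A l /\ ~ (exists y, dd x y <= 3 /\ A y)) by exact Hmult.
  clear Hbd Hmult.
  pose proof ln2_pos as Hl2.
  destruct (INR_unbounded (Dm / ln 2)) as [m Hm].
  assert (HmD : Dm < INR m * ln 2).
  { apply Rmult_lt_reg_r with (/ ln 2); [apply Rinv_0_lt_compat; auto|].
    rewrite Rmult_assoc, Rinv_r, Rmult_1_r by lra. unfold Rdiv in Hm. lra. }
  set (n := nn m). set (hh := (2 ^ m)%nat). set (J := S m).
  assert (Hn : n = (2 * hh)%nat) by (unfold n, nn, hh; simpl; lia).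
  assert (Hrn : rn m = 2 * INR hh).
  { unfold rn. fold n. rewrite Hn, mult_INR. reflexivity. }
  assert (Hhh : INR hh = 2 ^ m) by (unfold hh; rewrite pow_INR; reflexivity).
  pose proof (rn_ge2 m) as Hrn2.
  pose (sel := fun y : pt => proj1_sig (constructive_indefinite_description _ (Hcov y))).
  assert (Hsel : forall y, U (sel y) /\ sel y y)
    by (intro y; exact (proj2_sig (constructive_indefinite_description _ (Hcov y)))).
  set (SA := fun y => exists i, (i <= hh)%nat /\ y = g m i 0).
  set (SB := fun y => exists i, (hh <= i <= n)%nat /\ y = g m i 0).
  set (SC := fun y => (exists k, (k <= J)%nat /\ (y = g m 0 k \/ y = g m n k)) \/
                      (exists i, (i <= n)%nat /\ y = g m i J)).
  set (meets := fun (A : pt -> Prop) (S : pt -> Prop) => exists y, A y /\ S y).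
  set (colorOf := fun A => if excluded_middle_informative (meets A SA) then
                  (if excluded_middle_informative (meets A SB) then K3 else K2) else K1).
  assert (Htriple : forall A, U A -> meets A SA -> meets A SB -> meets A SC -> False).
  { intros A HU (p & Ap & i & Hi & ->) (q & Aq & i' & Hi' & ->) (r & Ar & Hr).
    destruct Hr as [(k & Hk & [-> | ->]) | (i'' & Hi'' & ->)].
    - pose proof (Hbd' A HU _ _ Aq Ar).
      assert (Ha : 0 < / (2 * rn m)) by (apply Rinv_0_lt_compat; lra).
      pose proof (dd_lb_p (g m i' 0) (g m 0 k) (/ (2 * rn m)) Ha) as Hlb.
      simpl in Hlb. rewrite gx_diff in Hlb by lia. rewrite gh_val in Hlb by lia.
      simpl (INR 0) in Hlb. rewrite Rminus_0_r, Rabs_right in Hlb by apply Rle_ge, pos_INR.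
      assert (INR hh <= INR i') by (apply le_INR; lia).
      assert (Hinv : / (2 * rn m) = INR hh / (rn m * rn m)) by (rewrite Hrn; field; lra).
      assert (Hle1 : / (2 * rn m) <= 1) by (apply Rmult_le_reg_r with (2 * rn m); [lra|]; rewrite Rinv_l by lra; lra).
      specialize (Hlb ltac:(rewrite Hinv; unfold Rdiv; apply Rmult_le_compat_r; [left; apply Rinv_0_lt_compat; nra|lra]) Hle1).
      rewrite ln_diff in Hlb by (try apply Rdiv_lt_0_compat; simpl; nra).
      replace (/ (2 * rn m) * / (2 ^ 0 / (rn m * rn m))) with (2 ^ m) in Hlb
        by (rewrite Hrn, Hhh; simpl; field; pose proof (pow_lt 2 m ltac:(lra)); lra).
      rewrite ln_pow in Hlb by lra. lra.
    - pose proof (Hbd' A HU _ _ Ap Ar).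
      assert (Ha : 0 < / (2 * rn m)) by (apply Rinv_0_lt_compat; lra).
      pose proof (dd_lb_p (g m i 0) (g m n k) (/ (2 * rn m)) Ha) as Hlb.
      simpl in Hlb. rewrite gx_diff in Hlb by lia. rewrite gh_val in Hlb by lia.
      assert (INR i <= INR hh) by (apply le_INR; lia).
      assert (INR n = rn m) by reflexivity.
      rewrite Rabs_left1 in Hlb by lra.
      assert (Hinv : / (2 * rn m) = INR hh / (rn m * rn m)) by (rewrite Hrn; field; lra).
      assert (Hle1 : / (2 * rn m) <= 1) by (apply Rmult_le_reg_r with (2 * rn m); [lra|]; rewrite Rinv_l by lra; lra).
      specialize (Hlb ltac:(rewrite Hinv; unfold Rdiv; apply Rmult_le_compat_r; [left; apply Rinv_0_lt_compat; nra|]; rewrite Hn, mult_INR; simpl; lra) Hle1).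
      rewrite ln_diff in Hlb by (try apply Rdiv_lt_0_compat; simpl; nra).
      replace (/ (2 * rn m) * / (2 ^ 0 / (rn m * rn m))) with (2 ^ m) in Hlb
        by (rewrite Hrn, Hhh; simpl; field; pose proof (pow_lt 2 m ltac:(lra)); lra).
      rewrite ln_pow in Hlb by lra. lra.
    - pose proof (Hbd' A HU _ _ Ap Ar).
      pose proof (dd_lb_h (g m i 0) (g m i'' J)) as Hlb. simpl in Hlb.
      rewrite !gh_val in Hlb by (unfold J; lia).
      rewrite ln_diff in Hlb by (apply Rdiv_lt_0_compat; [apply pow_lt; lra|nra]).
      replace (2 ^ J / (rn m * rn m) * / (2 ^ 0 / (rn m * rn m))) with (2 ^ J) in Hlb
        by (simpl; field; lra).
      rewrite ln_pow in Hlb by lra. unfold J in *. rewrite S_INR in Hlb. lra. }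
  assert (Hsm : forall y S, S y -> meets (sel y) S) by (intros y S Hy; exists y; split; auto; apply Hsel).
  assert (Hn1 : forall A, meets A SA -> colorOf A <> K1).
  { intros A HA. unfold colorOf. destruct (excluded_middle_informative (meets A SA)); [|contradiction].
    destruct (excluded_middle_informative _); discriminate. }
  assert (Hn2 : forall A, meets A SB -> colorOf A <> K2).
  { intros A HB. unfold colorOf. destruct (excluded_middle_informative (meets A SA)); [|discriminate].
    destruct (excluded_middle_informative _); [discriminate|contradiction]. }
  assert (Hn3 : forall A, U A -> meets A SC -> in12 (colorOf A)).
  { intros A HU HC. unfold colorOf, in12. destruct (excluded_middle_informative (meets A SA)); [|auto].
    destruct (excluded_middle_informative (meets A SB)); [|auto]. exfalso; eauto. }
  set (c := fun i k => colorOf (sel (g m i k))).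
  assert (HC : forall i k, SC (g m i k) -> in12 (c i k)).
  { intros i k H. apply Hn3; [apply Hsel|]. apply Hsm; auto. }
  destruct (sperner c n J hh) as (i & k & Hi & Hk & Hrb).
  - rewrite Hn; lia.
  - intros i Hi. apply Hn1. apply Hsm. exists i; auto.
  - intros i Hi Hi'. apply Hn2. apply Hsm. exists i; auto.
  - intros k Hk. apply HC. left. exists k; auto.
  - intros k Hk. apply HC. left. exists k; auto.
  - intros i Hi. apply HC. right. exists i; auto.
  - assert (in12 (c 0%nat 0%nat)) by (apply HC; left; exists 0%nat; split; [lia|auto]).
    assert (c 0%nat 0%nat <> K1) by (apply Hn1; apply Hsm; exists 0%nat; split; [lia|auto]).
    destruct H; [contradiction|auto].
  - assert (in12 (c n 0%nat)) by (apply HC; left; exists 0%nat; split; [lia|auto]).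
    assert (c n 0%nat <> K2) by (apply Hn2; apply Hsm; exists n; split; [lia|auto]).
    destruct H; [auto|contradiction].
  - assert (Hneq : forall y1 y2, c y1 <> c y2 -> True) by auto.
    destruct Hrb as [Hrb|Hrb]; unfold rb1, rb2 in Hrb; apply rb_neq in Hrb; destruct Hrb as (N1 & N2 & N3).
    + apply (mult_contra U Hmult' (g m i k) (sel (g m i k)) (sel (g m (S i) k)) (sel (g m (S i) (S k)))
               (g m i k) (g m (S i) k) (g m (S i) (S k))); try apply Hsel.
      * intro E. apply N1. unfold c. rewrite E. reflexivity.
      * intro E. apply N2. unfold c. rewrite E. reflexivity.
      * intro E. apply N3. unfold c. rewrite E. reflexivity.
      * rewrite dd_self; lra.
      * apply grid_edge_h; unfold J in Hk; lia.
      * apply grid_edge_d; unfold J in Hk; lia.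
    + apply (mult_contra U Hmult' (g m i k) (sel (g m i k)) (sel (g m i (S k))) (sel (g m (S i) (S k)))
               (g m i k) (g m i (S k)) (g m (S i) (S k))); try apply Hsel.
      * intro E. apply N1. unfold c. rewrite E. reflexivity.
      * intro E. apply N2. unfold c. rewrite E. reflexivity.
      * intro E. apply N3. unfold c. rewrite E. reflexivity.
      * rewrite dd_self; lra.
      * apply grid_edge_v; unfold J in Hk; lia.
      * apply grid_edge_d; unfold J in Hk; lia.
Qed.

Definition fl (r : R) : Z := (up r - 1)%Z.

Lemma fl_spec r : IZR (fl r) <= r < IZR (fl r) + 1.
Proof. unfold fl. rewrite minus_IZR. destruct (archimed r). simpl. lra. Qed.

Lemma fl_unique z r : IZR z <= r < IZR z + 1 -> fl r = z.
Proof.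
  intros [H1 H2]. destruct (fl_spec r) as [H3 H4].
  assert (fl r < z + 1)%Z by (apply lt_IZR; rewrite plus_IZR; simpl; lra).
  assert (z < fl r + 1)%Z by (apply lt_IZR; rewrite plus_IZR; simpl; lra).
  lia.
Qed.

Lemma fl_mono r t : r <= t -> (fl r <= fl t)%Z.
Proof.
  intro H. destruct (fl_spec r), (fl_spec t).
  assert (fl r < fl t + 1)%Z by (apply lt_IZR; rewrite plus_IZR; simpl; lra). lia.
Qed.

Lemma fl_two a t : a <= t -> t < a + 1 -> fl t = fl a \/ fl t = (fl a + 1)%Z.
Proof.
  intros H1 H2. pose proof (fl_mono _ _ H1). destruct (fl_spec a), (fl_spec t).
  assert (fl t < fl a + 2)%Z by (apply lt_IZR; rewrite plus_IZR; simpl; lra). lia.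
Qed.

Lemma fl_lt a t : (fl a < fl t)%Z -> a < IZR (fl t) <= t.
Proof.
  intro H. destruct (fl_spec a), (fl_spec t).
  assert (IZR (fl a + 1) <= IZR (fl t)) by (apply IZR_le; lia).
  rewrite plus_IZR in H4. simpl in H4. lra.
Qed.

Lemma fl_nonneg r : 0 <= r -> (0 <= fl r)%Z.
Proof. intro H. pose proof (fl_mono 0 r H). rewrite (fl_unique 0 0) in H0 by (simpl; lra). auto. Qed.

Lemma half_int (N : Z) : 1/2 <= Rabs (IZR N + 1/2).
Proof.
  destruct (Z_le_gt_dec 0 N).
  - apply IZR_le in l. rewrite Rabs_right by lra. lra.
  - assert (N <= -1)%Z by lia. apply IZR_le in H. rewrite Rabs_left by lra. lra.
Qed.

Lemma Rabs_le_inv a b : Rabs a <= b -> - b <= a <= b.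
Proof. unfold Rabs. destruct (Rcase_abs a); lra. Qed.

Lemma DF1 x y d : dd x y <= d -> Rabs (ln (ph x) - ln (ph y)) <= d.
Proof.
  intro H. pose proof (dd_lb_h x y). pose proof (dd_lb_h y x). rewrite dd_sym in H1.
  apply Rabs_le. lra.
Qed.

Lemma DF2 x y d : 0 < d -> dd x y <= d -> 2 * d < - ln (ph y) ->
  Rabs (px x - px y) <= exp d * ph x.
Proof.
  intros Hd H Hy. pose proof (DF1 x y d H) as H1. apply Rabs_le_inv in H1.
  pose proof (ln_ph_le0 x).
  assert (HN : NN x y < 1).
  { destruct (Rlt_dec (NN x y) 1); auto. exfalso.
    assert (NN x y = 1) by (pose proof (NN_le1 x y); lra).
    unfold dd in H. rewrite H2, ln_1 in H. lra. }
  eapply Rle_trans; [apply NN_small_px; auto|].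
  rewrite <- (exp_ln (ph x)) by apply ph_pos. rewrite <- exp_plus.
  rewrite <- (exp_ln (NN x y)) by apply NN_pos. apply exp_le'.
  unfold dd in H. lra.
Qed.

Lemma pigeon (A : Type) (c1 c2 c3 c4 k1 k2 k3 : A) :
  (c1 = k1 \/ c1 = k2 \/ c1 = k3) -> (c2 = k1 \/ c2 = k2 \/ c2 = k3) ->
  (c3 = k1 \/ c3 = k2 \/ c3 = k3) -> (c4 = k1 \/ c4 = k2 \/ c4 = k3) ->
  c1 = c2 \/ c1 = c3 \/ c1 = c4 \/ c2 = c3 \/ c2 = c4 \/ c3 = c4.
Proof.
  intros [ -> | [ -> | -> ] ] [ -> | [ -> | -> ] ] [ -> | [ -> | -> ] ] [ -> | [ -> | -> ] ]; intuition.
Qed.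

Section Bricks.
Variable d : R.
Hypothesis Hd : 0 < d.
Variable q : nat.
Hypothesis Hq : exp (2 * d) < 2 * INR q.

Definition beta := 2 * INR q.
Definition Lb := ln beta.
Definition KK := 4 * exp (2 * d) + 1.
Definition sv (x : pt) := - ln (ph x).
Definition bandZ (x : pt) : Z := fl (sv x / Lb).
Definition wd (j : Z) : R := KK * exp (- IZR j * Lb).
Definition idx (x : pt) : Z := fl (px x / wd (bandZ x) - 1/2).
Definition key (x : pt) : Z * Z := if Z.eqb (bandZ x) 0 then (0%Z, 0%Z) else (bandZ x, idx x).

Lemma beta_pos : 0 < beta.
Proof. unfold beta. pose proof (exp_pos (2 * d)). lra. Qed.

Lemma Lb_gt : 2 * d < Lb.
Proof. unfold Lb. rewrite <- (ln_exp (2 * d)). apply ln_increasing; [apply exp_pos|exact Hq]. Qed.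

Lemma Lb_pos : 0 < Lb.
Proof. pose proof Lb_gt; lra. Qed.

Lemma exp_Lb : exp Lb = beta.
Proof. unfold Lb. apply exp_ln, beta_pos. Qed.

Lemma sv_nonneg x : 0 <= sv x.
Proof. unfold sv. pose proof (ln_ph_le0 x). lra. Qed.

Lemma band_spec x : IZR (bandZ x) * Lb <= sv x < (IZR (bandZ x) + 1) * Lb.
Proof.
  pose proof Lb_pos. destruct (fl_spec (sv x / Lb)) as [H1 H2]. unfold bandZ.
  split.
  - apply Rmult_le_reg_r with (/ Lb); [apply Rinv_0_lt_compat; auto|].
    rewrite Rmult_assoc, Rinv_r, Rmult_1_r by lra. exact H1.
  - apply Rmult_lt_reg_r with (/ Lb); [apply Rinv_0_lt_compat; auto|].
    rewrite Rmult_assoc, Rinv_r, Rmult_1_r by lra. exact H2.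
Qed.

Lemma band_nonneg x : (0 <= bandZ x)%Z.
Proof. unfold bandZ. apply fl_nonneg. unfold Rdiv. apply Rmult_le_pos; [apply sv_nonneg|left; apply Rinv_0_lt_compat, Lb_pos]. Qed.

Lemma KK_pos : 0 < KK.
Proof. unfold KK. pose proof (exp_pos (2*d)); lra. Qed.

Lemma wd_pos j : 0 < wd j.
Proof. unfold wd. pose proof KK_pos. pose proof (exp_pos (- IZR j * Lb)). nra. Qed.

Lemma wd_pred j : wd (j - 1) = beta * wd j.
Proof.
  unfold wd. rewrite minus_IZR. simpl.
  replace (- (IZR j - 1) * Lb) with (- IZR j * Lb + Lb) by ring.
  rewrite exp_plus, exp_Lb. ring.
Qed.

Lemma ph_exp x : ph x = exp (- sv x).
Proof. unfold sv. rewrite Ropp_involutive, exp_ln; auto. apply ph_pos. Qed.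

Definition Dm := 2 * ln (KK + 1) + 2 * Lb.

Lemma key_band x y : key x = key y -> bandZ x = bandZ y.
Proof.
  unfold key. pose proof (band_nonneg x); pose proof (band_nonneg y).
  destruct (Z.eqb_spec (bandZ x) 0), (Z.eqb_spec (bandZ y) 0); intro E; try congruence;
  inversion E; lia.
Qed.

Lemma key_bounded x y : key x = key y -> dd x y <= Dm.
Proof.
  intro E. pose proof (key_band x y E) as Eb.
  pose proof (band_spec x) as [Bx1 Bx2]; pose proof (band_spec y) as [By1 By2].
  rewrite Eb in Bx1, Bx2.
  pose proof Lb_pos. pose proof KK_pos.
  assert (HK : 0 <= ln (KK + 1)) by (rewrite <- ln_1; apply ln_le'; lra).
  assert (Hdd : dd x y = 2 * ln (NN x y) + sv x + sv y) by (unfold dd, sv; ring).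
  rewrite Hdd. unfold Dm.
  destruct (Z.eq_dec (bandZ y) 0) as [E0|E0].
  - rewrite E0 in *. simpl in *.
    assert (ln (NN x y) <= 0) by (rewrite <- ln_1; apply ln_le'; [apply NN_pos|apply NN_le1]). lra.
  - unfold key in E. rewrite Eb in E. destruct (Z.eqb_spec (bandZ y) 0); [contradiction|].
    inversion E as [Ei]. unfold idx in Ei. rewrite Eb in Ei.
    set (j := bandZ y) in *. set (w := wd j) in *.
    pose proof (fl_spec (px x / w - 1/2)); pose proof (fl_spec (px y / w - 1/2)).
    rewrite Ei in H1.
    pose proof (wd_pos j) as Hw. fold w in Hw.
    assert (Hdp : Rabs (px x - px y) < w).
    { assert (Rabs (px x / w - px y / w) < 1) by (apply Rabs_def1; lra).
      replace (px x - px y) with ((px x / w - px y / w) * w) by (field; lra).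
      rewrite Rabs_mult, (Rabs_right w) by lra. nra. }
    set (E1 := exp (- IZR j * Lb)).
    assert (HE1 : 0 < E1) by apply exp_pos.
    assert (Hhx : ph x <= E1) by (rewrite ph_exp; apply exp_le'; lra).
    assert (Hhy : ph y <= E1) by (rewrite ph_exp; apply exp_le'; lra).
    assert (HN : NN x y <= (KK + 1) * E1).
    { unfold NN. eapply Rle_trans; [apply Rmin_l|].
      unfold w, wd in Hdp. fold E1 in Hdp. unfold Rmax; destruct (Rle_dec _ _); lra. }
    apply ln_le' in HN; [|apply NN_pos]. rewrite ln_mult in HN by lra.
    unfold E1 in HN. rewrite ln_exp in HN. nra.
Qed.

Lemma key_nz y : bandZ y <> 0%Z -> key y = (bandZ y, idx y).
Proof. intro H. unfold key. destruct (Z.eqb_spec (bandZ y) 0); [contradiction|reflexivity]. Qed.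
Lemma key_z y : bandZ y = 0%Z -> key y = (0%Z, 0%Z).
Proof. intro H. unfold key. rewrite H. reflexivity. Qed.

Lemma brick_fl W p0 p rho : 0 < W -> 4 * rho < W -> 0 <= rho -> Rabs (p - p0) <= rho ->
   fl (p / W - 1/2) = fl ((p0 - rho)/W - 1/2) \/
   (fl (p / W - 1/2) = (fl ((p0 - rho)/W - 1/2) + 1)%Z /\
    p0 - rho < (IZR (fl (p / W - 1/2)) + 1/2) * W <= p0 + rho).
Proof.
  intros HW Hr Hr0 Hp. apply Rabs_le_inv in Hp.
  set (t := p / W - 1/2). set (a := (p0 - rho)/W - 1/2).
  assert (Hat : a <= t).
  { unfold a, t. unfold Rdiv. apply Rplus_le_compat_r. apply Rmult_le_compat_r; [left; apply Rinv_0_lt_compat; auto|lra]. }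
  assert (Hta : t < a + 1).
  { unfold a, t. replace ((p0 - rho) / W - 1/2 + 1) with ((p0 - rho + W) / W - 1/2) by (field; lra).
    unfold Rdiv. apply Rplus_lt_compat_r. apply Rmult_lt_compat_r; [apply Rinv_0_lt_compat; auto|lra]. }
  destruct (fl_two a t Hat Hta) as [H|H]; [left; auto|right; split; auto].
  assert (Hlt : (fl a < fl t)%Z) by lia. apply fl_lt in Hlt. destruct Hlt as [H1 H2].
  split.
  - unfold a in H1. apply Rmult_lt_reg_r with (/ W); [apply Rinv_0_lt_compat; auto|].
    replace ((IZR (fl t) + 1/2) * W * / W) with (IZR (fl t) + 1/2) by (field; lra).
    replace ((p0 - rho) * / W) with ((p0 - rho) / W) by reflexivity. lra.
  - unfold t in H2. apply Rmult_le_reg_r with (/ W); [apply Rinv_0_lt_compat; auto|].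
    replace ((IZR (fl (p / W - 1/2)) + 1/2) * W * / W) with (IZR (fl (p / W - 1/2)) + 1/2) by (field; lra).
    assert (p / W <= (p0 + rho) / W) by (unfold Rdiv; apply Rmult_le_compat_r; [left; apply Rinv_0_lt_compat; auto|lra]).
    unfold t in *. unfold Rdiv in *. rewrite Rmult_assoc, Rinv_r, Rmult_1_r by lra. lra.
Qed.

Lemma conflict w rho p0 z z' : 0 < w -> 4 * rho < w ->
  p0 - rho < (IZR z + 1/2) * w <= p0 + rho ->
  p0 - rho < (IZR z' + 1/2) * (beta * w) <= p0 + rho -> False.
Proof.
  intros Hw Hr H1 H2.
  assert (Hb : beta = IZR (2 * Z.of_nat q)) by (unfold beta; rewrite mult_IZR, <- INR_IZR_INZ; reflexivity).
  assert (E : (IZR z + 1/2) * w - (IZR z' + 1/2) * (beta * w) =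
              (IZR (z - 2 * Z.of_nat q * z' - Z.of_nat q) + 1/2) * w).
  { rewrite Hb. rewrite !minus_IZR, !mult_IZR. simpl. field. }
  pose proof (half_int (z - 2 * Z.of_nat q * z' - Z.of_nat q)).
  assert (Rabs ((IZR z + 1/2) * w - (IZR z' + 1/2) * (beta * w)) < w / 2) by (apply Rabs_def1; lra).
  rewrite E, Rabs_mult, (Rabs_right w) in H0 by lra. nra.
Qed.

Lemma three_keys x : exists k1 k2 k3 : Z * Z, forall y, dd x y <= d ->
  key y = k1 \/ key y = k2 \/ key y = k3.
Proof.
  pose proof Lb_pos as HL. pose proof Lb_gt as HL2.
  set (jA := fl ((sv x + d) / Lb)).
  assert (HjA : IZR jA * Lb <= sv x + d < (IZR jA + 1) * Lb).
  { destruct (fl_spec ((sv x + d) / Lb)) as [H1 H2]. fold jA in H1, H2. split.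
    - apply Rmult_le_reg_r with (/ Lb); [apply Rinv_0_lt_compat; auto|].
      rewrite Rmult_assoc, Rinv_r, Rmult_1_r by lra. exact H1.
    - apply Rmult_lt_reg_r with (/ Lb); [apply Rinv_0_lt_compat; auto|].
      rewrite Rmult_assoc, Rinv_r, Rmult_1_r by lra. exact H2. }
  assert (Hsv : forall y, dd x y <= d -> Rabs (sv x - sv y) <= d).
  { intros y H. unfold sv. replace (- ln (ph x) - - ln (ph y)) with (- (ln (ph x) - ln (ph y))) by ring.
    rewrite Rabs_Ropp. apply DF1; auto. }
  assert (Y1 : forall y, dd x y <= d -> (jA - 1 <= bandZ y <= jA)%Z).
  { intros y H. apply Hsv in H. apply Rabs_le_inv in H. destruct (band_spec y) as [B1 B2].
    split.
    - assert (IZR jA - 2 < IZR (bandZ y)).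
      { apply Rmult_lt_reg_r with Lb; auto. lra. }
      assert (jA - 2 < bandZ y)%Z by (apply lt_IZR; rewrite minus_IZR; simpl; lra). lia.
    - assert (IZR (bandZ y) < IZR jA + 1) by (apply Rmult_lt_reg_r with Lb; auto; lra).
      assert (bandZ y < jA + 1)%Z by (apply lt_IZR; rewrite plus_IZR; simpl; lra). lia. }
  set (rho := exp (2 * d - IZR jA * Lb)).
  assert (Hrho0 : 0 <= rho) by (left; apply exp_pos).
  assert (Y2 : forall y, dd x y <= d -> (1 <= bandZ y)%Z -> Rabs (px y - px x) <= rho).
  { intros y H Hb. destruct (band_spec y) as [B1 B2].
    assert (1 <= IZR (bandZ y)) by (apply IZR_le in Hb; auto).
    assert (2 * d < - ln (ph y)) by (fold (sv y); nra).
    pose proof (DF2 x y d Hd H H1). rewrite Rabs_minus_sym.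
    eapply Rle_trans; [exact H2|]. rewrite ph_exp, <- exp_plus. apply exp_le'. lra. }
  set (w := wd jA).
  assert (Hw : 0 < w) by apply wd_pos.
  assert (Hw4 : 4 * rho < w).
  { unfold rho, w, wd, KK. replace (2 * d - IZR jA * Lb) with (2 * d + - IZR jA * Lb) by ring.
    rewrite exp_plus. pose proof (exp_pos (- IZR jA * Lb)). pose proof (exp_pos (2 * d)). nra. }
  assert (Hbeta1 : 1 <= beta).
  { unfold beta. pose proof (exp_ineq1_le (2 * d)). lra. }
  set (a := (px x - rho) / w - 1/2).
  assert (Hw' : 0 < wd (jA - 1)) by apply wd_pos.
  assert (Hw4' : 4 * rho < wd (jA - 1)) by (rewrite wd_pred; fold w; nra).
  set (a' := (px x - rho) / wd (jA - 1) - 1/2).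
  assert (Bj : forall y, dd x y <= d -> bandZ y = jA -> (1 <= jA)%Z ->
     idx y = fl a \/ (idx y = (fl a + 1)%Z /\ px x - rho < (IZR (idx y) + 1/2) * w <= px x + rho)).
  { intros y H Hb H1. unfold idx. rewrite Hb. fold w.
    apply brick_fl; auto. apply Y2; auto; lia. }
  assert (Bj' : forall y, dd x y <= d -> bandZ y = (jA - 1)%Z -> (1 <= jA - 1)%Z ->
     idx y = fl a' \/ (idx y = (fl a' + 1)%Z /\
        px x - rho < (IZR (idx y) + 1/2) * wd (jA - 1) <= px x + rho)).
  { intros y H Hb H1. unfold idx. rewrite Hb.
    apply brick_fl; auto. apply Y2; auto; lia. }
  destruct (Z_le_gt_dec jA 0) as [J0|J0].
  { exists (0%Z, 0%Z), (0%Z, 0%Z), (0%Z, 0%Z). intros y H. left. apply key_z.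
    pose proof (Y1 y H); pose proof (band_nonneg y). lia. }
  destruct (Z.eq_dec jA 1) as [J1|J1].
  { exists (0%Z, 0%Z), (1%Z, fl a), (1%Z, (fl a + 1)%Z). intros y H.
    pose proof (Y1 y H); pose proof (band_nonneg y).
    destruct (Z.eq_dec (bandZ y) 0) as [E|E]; [left; apply key_z; auto|].
    right. rewrite key_nz by auto.
    assert (Ebj : bandZ y = jA) by lia.
    destruct (Bj y H Ebj ltac:(lia)) as [E'|[E' _]]; rewrite E'; [left|right]; f_equal; lia. }
  destruct (classic (exists y1, dd x y1 <= d /\ bandZ y1 = jA /\ idx y1 = (fl a + 1)%Z)) as [Ex|NEx].
  - exists (jA, fl a), (jA, (fl a + 1)%Z), ((jA - 1)%Z, fl a'). intros y H.
    pose proof (Y1 y H).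
    rewrite key_nz by lia.
    destruct (Z.eq_dec (bandZ y) jA) as [E|E].
    + rewrite E. destruct (Bj y H E ltac:(lia)) as [E'|[E' _]]; rewrite E'; auto.
    + assert (Eb : bandZ y = (jA - 1)%Z) by lia. rewrite Eb. right; right.
      destruct (Bj' y H Eb ltac:(lia)) as [E'|[E' HP']]; [rewrite E'; auto|].
      exfalso. destruct Ex as (y1 & H1 & Hb1 & Hi1).
      destruct (Bj y1 H1 Hb1 ltac:(lia)) as [E1|[E1 HP]]; [lia|].
      rewrite wd_pred in HP'. fold w in HP'.
      apply (conflict w rho (px x) (idx y1) (idx y)); auto.
  - exists (jA, fl a), ((jA - 1)%Z, fl a'), ((jA - 1)%Z, (fl a' + 1)%Z). intros y H.
    pose proof (Y1 y H).
    rewrite key_nz by lia.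
    destruct (Z.eq_dec (bandZ y) jA) as [E|E].
    + rewrite E. left. destruct (Bj y H E ltac:(lia)) as [E'|[E' _]]; [rewrite E'; auto|].
      exfalso; apply NEx; exists y; auto.
    + assert (Eb : bandZ y = (jA - 1)%Z) by lia. rewrite Eb. right.
      destruct (Bj' y H Eb ltac:(lia)) as [E'|[E' _]]; rewrite E'; auto.
Qed.

End Bricks.

Theorem X_asdim2 : asdim_le X 2.
Proof.
  intros d Hd.
  destruct (INR_unbounded (exp (2 * d) / 2)) as [q Hq].
  assert (Hq' : exp (2 * d) < 2 * INR q) by lra.
  exists (fun A => exists k, A = fun y => key d q y = k).
  split; [|split].
  - intro x. exists (fun y => key d q y = key d q x). split; [eauto|reflexivity].
  - exists (Dm d q). intros A [k ->] x y Hx Hy. cbn. apply key_bounded; auto. congruence.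
  - intros x l Hnd Hlen Hin.
    destruct (three_keys d Hd q Hq' x) as (k1 & k2 & k3 & Hk).
    destruct (classic (exists A, In A l /\ ~ (exists y, closed_ball X x d y /\ A y))) as [h|h]; auto.
    exfalso.
    assert (Hall : forall A, In A l -> exists y, dd x y <= d /\ A y).
    { intros A HA. destruct (classic (exists y, dd x y <= d /\ A y)) as [h'|h']; auto.
      exfalso. apply h. exists A. split; auto. }
    destruct l as [|A1 [|A2 [|A3 [|A4 [|]]]]]; simpl in Hlen; try discriminate.
    destruct (Hin A1 ltac:(simpl; auto)) as [c1 ->].
    destruct (Hin A2 ltac:(simpl; auto)) as [c2 ->].
    destruct (Hin A3 ltac:(simpl; auto)) as [c3 ->].
    destruct (Hin A4 ltac:(simpl; auto)) as [c4 ->].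
    destruct (Hall (fun y => key d q y = c1) ltac:(simpl; auto)) as (y1 & H1 & E1). simpl in E1.
    destruct (Hall (fun y => key d q y = c2) ltac:(simpl; auto)) as (y2 & H2 & E2). simpl in E2.
    destruct (Hall (fun y => key d q y = c3) ltac:(simpl; auto)) as (y3 & H3 & E3). simpl in E3.
    destruct (Hall (fun y => key d q y = c4) ltac:(simpl; auto)) as (y4 & H4 & E4). simpl in E4.
    pose proof (Hk y1 H1); pose proof (Hk y2 H2); pose proof (Hk y3 H3); pose proof (Hk y4 H4).
    rewrite E1 in H; rewrite E2 in H0; rewrite E3 in H5; rewrite E4 in H6.
    pose proof (pigeon _ c1 c2 c3 c4 k1 k2 k3 H H0 H5 H6) as P. clear E1 E2 E3 E4 H H0 H5 H6 Hall h Hin Hk.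
    inversion Hnd as [|? ? N1 Hnd2]; subst. inversion Hnd2 as [|? ? N2 Hnd3]; subst.
    inversion Hnd3 as [|? ? N3 _]; subst.
    destruct P as [P|[P|[P|[P|[P|P]]]]]; subst.
    + apply N1; left; reflexivity.
    + apply N1; right; left; reflexivity.
    + apply N1; right; right; left; reflexivity.
    + apply N2; left; reflexivity.
    + apply N2; right; left; reflexivity.
    + apply N3; left; reflexivity.
Qed.


Theorem mainTheorem1 :
  exists X : MetricSpace,
    gromov_hyperbolic X /\ visual X /\
    asdim_eq X 2 /\
    (forall w : X, covdim_eq (boundary X w) (boundary_open X w) 0).
Proof.
  exists X. split; [apply X_hyp|]. split; [apply X_visual|].
  split; [split; [apply X_asdim2|apply not_asdim1]|].
  apply X_boundary.
Qed.
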